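(* $\mathbf{FO}(\mathrm{NE},\sqcup,\sim)=\mathbf{FO}(\mathrm{NE},\sqcup)$: every formula of $\mathbf{FO}(\mathrm{NE},\sqcup,\sim)$ is equivalent to some formula of $\mathbf{FO}(\mathrm{NE},\sqcup)$ (and conversely).
   Context: Team semantics (lax version). For a structure $\mathfrak M$ with domain $M$, a team $X$ is a (possibly empty) set of assignments $s:V\to M$, $V$ a finite set of variables. Satisfaction for formulas in negation normal form: first-order literal $\alpha$: every $s\in X$ satisfies $\alpha$ (Tarski); $\psi\vee\theta$: $X=Y\cup Z$ with $\mathfrak M\models_Y\psi$, $\mathfrak M\models_Z\theta$; $\psi\wedge\theta$: both; $\exists v\psi$: some $F:X\to\mathcal P(M)\setminus\{\emptyset\}$ with $\mathfrak M\models_{X[F/v]}\psi$, $X[F/v]=\{s[m/v]:s\in X,m\in F(s)\}$; $\forall v\psi$: $\mathfrak M\models_{X[M/v]}\psi$, $X[M/v]=\{s[m/v]:s\in X,m\in M\}$. $\mathfrak M\models_X\mathrm{NE}$ iff $X\ne\emptyset$; $\mathfrak M\models_X\phi\sqcup\psi$ iff $\mathfrak M\models_X\phi$ or $\mathfrak M\models_X\psi$; contradictory negation $\mathfrak M\models_X\sim\phi$ iff $\mathfrak M\not\models_X\phi$ (applicable to arbitrary formulas). Two formulas are equivalent if satisfied by the same teams in all structures. *)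

(* Defs.v *)
From mathcomp Require Import all_boot.
Set Implicit Arguments.
Unset Strict Implicit.
Unset Printing Implicit Defensive.

Record signature := Signature {
  fsym : Type; far : fsym -> nat;
  rsym : Type; rar : rsym -> nat }.

Inductive term (L : signature) : Type :=
  | Var : nat -> term L
  | App : forall f : fsym L, ('I_(far f) -> term L) -> term L.

(* Formulas in negation normal form, extended with NE, global disjunction
   \sqcup (GOr) and contradictory negation ~ (CNeg, applicable to any formula). *)
Inductive formula (L : signature) : Type :=
  | Eq   : term L -> term L -> formula L
  | NEq  : term L -> term L -> formula L
  | Rel  : forall r : rsym L, ('I_(rar r) -> term L) -> formula L
  | NRel : forall r : rsym L, ('I_(rar r) -> term L) -> formula L
  | And  : formula L -> formula L -> formula L
  | Or   : formula L -> formula L -> formula L    (* tensor / split disjunction *)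
  | Ex   : nat -> formula L -> formula L
  | All  : nat -> formula L -> formula L
  | NE   : formula L
  | GOr  : formula L -> formula L -> formula L
  | CNeg : formula L -> formula L.

Fixpoint neg_free (L : signature) (phi : formula L) : bool :=
  match phi with
  | And a b | Or a b | GOr a b => neg_free a && neg_free b
  | Ex _ a | All _ a => neg_free a
  | CNeg _ => false
  | _ => true
  end.

Record structure (L : signature) := Structure {
  dom : Type;
  dom_inhabited : dom;
  fint : forall f : fsym L, ('I_(far f) -> dom) -> dom;
  rint : forall r : rsym L, ('I_(rar r) -> dom) -> Prop }.

Definition assignment L (A : structure L) := nat -> dom A.
Definition team L (A : structure L) := assignment A -> Prop.

Definition upd L (A : structure L) (s : assignment A) (v : nat) (m : dom A)
  : assignment A := fun w => if w == v then m else s w.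

Fixpoint teval L (A : structure L) (s : assignment A) (t : term L) : dom A :=
  match t with
  | Var n => s n
  | App f args => @fint L A f (fun i => teval s (args i))
  end.

Definition lit L (A : structure L) (s : assignment A) (phi : formula L) : Prop :=
  match phi with
  | Eq t1 t2 => teval s t1 = teval s t2
  | NEq t1 t2 => teval s t1 <> teval s t2
  | Rel r ts => @rint L A r (fun i => teval s (ts i))
  | NRel r ts => ~ @rint L A r (fun i => teval s (ts i))
  | _ => True
  end.

(* Lax team semantics *)
Fixpoint sat L (A : structure L) (phi : formula L) (X : team A) : Prop :=
  match phi with
  | Eq _ _ | NEq _ _ | Rel _ _ | NRel _ _ => forall s, X s -> lit s phi
  | And a b => sat a X /\ sat b X
  | Or a b => exists (Y Z : team A),
      (forall s, X s <-> (Y s \/ Z s)) /\ sat a Y /\ sat b Z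
  | Ex v a => exists F : assignment A -> dom A -> Prop,
      (forall s, X s -> exists m, F s m) /\
      sat a (fun s' => exists s m, [/\ X s, F s m & s' = upd s v m])
  | All v a => sat a (fun s' => exists s m, X s /\ s' = upd s v m)
  | NE => exists s, X s
  | GOr a b => sat a X \/ sat b X
  | CNeg a => ~ sat a X
  end.

Definition equivalent L (phi psi : formula L) : Prop :=
  forall (A : structure L) (X : team A), sat phi X <-> sat psi X.

(* Main.v *)
Require Import Defs.
From mathcomp Require Import all_boot.
From Stdlib Require Import Classical.
Require Stdlib.Lists.List.

Unset Implicit Arguments.
Unset Strict Implicit.

Section NF.
Variable L : signature.

Inductive fo : Type :=
  | FEq : term L -> term L -> fo
  | FNEq : term L -> term L -> fo
  | FRel : forall r : rsym L, ('I_(rar r) -> term L) -> fo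
  | FNRel : forall r : rsym L, ('I_(rar r) -> term L) -> fo
  | FAnd : fo -> fo -> fo
  | FOr : fo -> fo -> fo
  | FEx : nat -> fo -> fo
  | FAll : nat -> fo -> fo.
Set Implicit Arguments.

Fixpoint emb (a : fo) : formula L :=
  match a with
  | FEq t1 t2 => Eq t1 t2
  | FNEq t1 t2 => NEq t1 t2
  | FRel r ts => Rel ts
  | FNRel r ts => NRel ts
  | FAnd a b => And (emb a) (emb b)
  | FOr a b => Or (emb a) (emb b)
  | FEx v a => Ex v (emb a)
  | FAll v a => All v (emb a)
  end.

Fixpoint dual (a : fo) : fo :=
  match a with
  | FEq t1 t2 => FNEq t1 t2
  | FNEq t1 t2 => FEq t1 t2
  | FRel r ts => FNRel r ts
  | FNRel r ts => FRel r ts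
  | FAnd a b => FOr (dual a) (dual b)
  | FOr a b => FAnd (dual a) (dual b)
  | FEx v a => FAll v (dual a)
  | FAll v a => FEx v (dual a)
  end.

Fixpoint T (A : structure L) (a : fo) (s : assignment A) : Prop :=
  match a with
  | FEq t1 t2 => teval s t1 = teval s t2
  | FNEq t1 t2 => teval s t1 <> teval s t2
  | FRel r ts => @rint L A r (fun i => teval s (ts i))
  | FNRel r ts => ~ @rint L A r (fun i => teval s (ts i))
  | FAnd a b => T a s /\ T b s
  | FOr a b => T a s \/ T b s
  | FEx v a => exists m, T a (upd s v m)
  | FAll v a => forall m, T a (upd s v m)
  end.

Lemma T_dual A a (s : assignment A) : T (dual a) s <-> ~ T a s.
Proof.
elim: a s => /=.
- move=> t1 t2 s; tauto.
- move=> t1 t2 s; split; [tauto|apply: NNPP].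
- move=> r ts s; tauto.
- move=> r ts s; split; [tauto|apply: NNPP].
- move=> a IHa b IHb s; rewrite IHa IHb; tauto.
- move=> a IHa b IHb s; rewrite IHa IHb; tauto.
- move=> v a IH s; split.
  + move=> H [m Hm]. by apply/(IH _).1: Hm.
  + move=> H m; apply/IH => Hm; apply: H; by exists m.
- move=> v a IH s; split.
  + move=> [m Hm] H. by apply/(IH _).1: (H m).
  + move=> H. apply: NNPP => H1; apply: H => m. apply: NNPP => H2.
    apply: H1; exists m; by apply/IH.
Qed.

Lemma flat A a (X : team A) : sat (emb a) X <-> forall s, X s -> T a s.
Proof.
elim: a X => /=; try by [].
- move=> a IHa b IHb X; rewrite IHa IHb; split.
  + by move=> [H1 H2] s Hs; split; auto.
  + move=> H; split => s Hs; by case: (H s Hs).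
- move=> a IHa b IHb X; split.
  + move=> [Y [Z [HX [HY HZ]]]] s Hs.
    case: ((HX s).1 Hs) => H.
    * left; by apply: (IHa Y).1.
    * right; by apply: (IHb Z).1.
  + move=> H; exists (fun s => X s /\ T a s), (fun s => X s /\ T b s).
    split; [|split].
    * move=> s; split; last by case=> [[]|[]].
      move=> Hs; by case: (H s Hs) => ?; [left|right].
    * by apply/IHa => s [].
    * by apply/IHb => s [].
- move=> v a IH X; split.
  + move=> [F [HF Ha]] s Hs. have [m Hm] := HF s Hs.
    exists m; move/IH: Ha; apply. by exists s, m.
  + move=> H. exists (fun s m => T a (upd s v m)); split; first by [].
    apply/IH => s' [s [m [_ Hm ->]]]. by [].
- move=> v a IH X; split.
  + move=> H s Hs m; move/IH: H; apply. by exists s, m.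
  + move=> H; apply/IH => s' [s [m [Hs ->]]]; by apply: H.
Qed.

Definition basic := (fo * seq fo)%type.

Definition bsat A (X : team A) (p : basic) :=
  (forall s, X s -> T p.1 s) /\
  (forall b, List.In b p.2 -> exists s, X s /\ T b s).

Definition nsat A (X : team A) (N : seq basic) :=
  exists p, List.In p N /\ bsat X p.

Fixpoint prod (f : basic -> basic -> basic) (N M : seq basic) : seq basic :=
  match N with
  | [::] => [::]
  | p :: N' => List.app (List.map (f p) M) (prod f N' M)
  end.

Lemma in_prod f N M z : List.In z (prod f N M) <->
  exists p q, [/\ List.In p N, List.In q M & z = f p q].
Proof.
elim: N => [|p N IH] /=.
- split => // [[p [q [[]]]]].
- rewrite List.in_app_iff IH List.in_map_iff; split.
  + case=> [[q [<- Hq]]|[p' [q [H1 H2 ->]]]].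
    * exists p, q; split; auto.
    * exists p', q; split; auto.
  + move=> [p' [q [[<-|H1] H2 ->]]].
    * left; exists q; auto.
    * right; exists p', q; split; auto.
Qed.

Lemma nsat_prod A (X : team A) f N M : nsat X (prod f N M) <->
  exists p q, [/\ List.In p N, List.In q M & bsat X (f p q)].
Proof.
split.
- move=> [z [/in_prod [p [q [H1 H2 ->]]] Hz]]; exists p, q; split; auto.
- move=> [p [q [H1 H2 H3]]]; exists (f p q); split => //.
  apply/in_prod; exists p, q; split; auto.
Qed.

Lemma nsat_app A (X : team A) N M : nsat X (List.app N M) <-> nsat X N \/ nsat X M.
Proof.
split.
- move=> [p [/List.in_app_iff [H|H] Hp]]; [left|right]; by exists p.
- case=> [[p [H Hp]]|[p [H Hp]]]; exists p; split => //; apply/List.in_app_iff; auto.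
Qed.

Definition top : fo := FEq (@Var L 0) (@Var L 0).

Definition conjb (p q : basic) : basic := (FAnd p.1 q.1, List.app p.2 q.2).
Definition orb (p q : basic) : basic :=
  (FOr p.1 q.1, List.app (List.map (FAnd p.1) p.2) (List.map (FAnd q.1) q.2)).
Definition exb v (p : basic) : basic :=
  (FEx v p.1, List.map (fun b => FEx v (FAnd p.1 b)) p.2).
Definition allb v (p : basic) : basic :=
  (FAll v p.1, List.map (FEx v) p.2).
Definition negb (p : basic) : seq basic :=
  (top, [:: dual p.1]) :: List.map (fun b => (dual b, [::])) p.2.
Fixpoint negN (N : seq basic) : seq basic :=
  match N with
  | [::] => [:: (top, [::])]
  | p :: N' => prod conjb (negb p) (negN N')
  end.

Lemma bsat_conj A (X : team A) p q : bsat X (conjb p q) <-> bsat X p /\ bsat X q.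
Proof.
rewrite /bsat /=; split.
- move=> [H1 H2]; split; split.
  + by move=> s /H1 [].
  + move=> b Hb; apply: H2; apply/List.in_app_iff; auto.
  + by move=> s /H1 [].
  + move=> b Hb; apply: H2; apply/List.in_app_iff; auto.
- move=> [[H1 H2] [H3 H4]]; split.
  + move=> s Hs; split; auto.
  + by move=> b /List.in_app_iff [/H2|/H4].
Qed.

Lemma nsat_conj A (X : team A) N M : nsat X (prod conjb N M) <-> nsat X N /\ nsat X M.
Proof.
rewrite nsat_prod; split.
- move=> [p [q [H1 H2 /bsat_conj [H3 H4]]]]; split; [exists p|exists q]; auto.
- move=> [[p [H1 H2]] [q [H3 H4]]]; exists p, q; split => //; by apply/bsat_conj.
Qed.

Lemma nsat_negb A (X : team A) p : nsat X (negb p) <-> ~ bsat X p.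
Proof.
split.
- move=> [z [[<-|/List.in_map_iff [b [<- Hb]]] [H1 H2]]] [H3 H4] /=.
  + have [s [Hs Hd]] := H2 _ (or_introl erefl).
    by move/T_dual: Hd; apply; apply: H3.
  + have [s [Hs Hb']] := H4 _ Hb. by move/T_dual: (H1 _ Hs).
- move=> H. case: (classic (forall s, X s -> T p.1 s)) => H1.
  + have : ~ forall b, List.In b p.2 -> exists s, X s /\ T b s.
      by move=> H2; apply: H.
    move=> H2. apply: NNPP => H3; apply: H2 => b Hb.
    apply: NNPP => H4; apply: H3. exists (dual b, [::]); split.
    * right; apply/List.in_map_iff; by exists b.
    * split => //= s Hs; apply/T_dual => Hbs; apply: H4; by exists s.
  + exists (top, [:: dual p.1]); split; first by left.
    split => //= b [<-|//].
    apply: NNPP => H2; apply: H1 => s Hs; apply: NNPP => H3; apply: H2.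
    exists s; split => //; by apply/T_dual.
Qed.

Lemma nsat_neg A (X : team A) N : nsat X (negN N) <-> ~ nsat X N.
Proof.
elim: N => [|p N IH].
- rewrite /=; split.
  + by move=> _ [p [[]]].
  + move=> _; exists (top, [::]); split; first by left.
    by split => // b [].
- change (nsat X (prod conjb (negb p) (negN N)) <-> ~ nsat X (p :: N)).
  rewrite nsat_conj IH nsat_negb; split.
  + move=> [H1 H2] [q [[<-|Hq] H3]] //; apply: H2; by exists q.
  + move=> H; split => H1; apply: H.
    * exists p; split => //; by left.
    * move: H1 => [q [H1 H2]]; exists q; split => //; by right.
Qed.

Fixpoint nf (phi : formula L) : seq basic :=
  match phi with
  | Eq t1 t2 => [:: (FEq t1 t2, [::])]
  | NEq t1 t2 => [:: (FNEq t1 t2, [::])]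
  | Rel r ts => [:: (FRel r ts, [::])]
  | NRel r ts => [:: (FNRel r ts, [::])]
  | And a b => prod conjb (nf a) (nf b)
  | Or a b => prod orb (nf a) (nf b)
  | Ex v a => List.map (exb v) (nf a)
  | All v a => List.map (allb v) (nf a)
  | NE => [:: (top, [:: top])]
  | GOr a b => List.app (nf a) (nf b)
  | CNeg a => negN (nf a)
  end.

Lemma nsat_single A (X : team A) a :
  nsat X [:: (a, [::])] <-> forall s, X s -> T a s.
Proof.
split.
- by move=> [p [[<-|[]] [H _]]].
- move=> H; exists (a, [::]); split; first by left. by split.
Qed.

Lemma nsat_map A (X : team A) (f : basic -> basic) (N : seq basic) :
  nsat X (List.map f N) <-> exists p, List.In p N /\ bsat X (f p).
Proof.
split.
- move=> [z [/List.in_map_iff [p [<- Hp]] Hz]]; by exists p.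
- move=> [p [Hp H]]; exists (f p); split => //; apply/List.in_map_iff; by exists p.
Qed.

Lemma or_basic A (X : team A) p q :
  (exists Y Z : team A, (forall s, X s <-> (Y s \/ Z s)) /\ bsat Y p /\ bsat Z q)
  <-> bsat X (orb p q).
Proof.
rewrite /bsat /=; split.
- move=> [Y [Z [HX [[H1 H2] [H3 H4]]]]]; split.
  + move=> s /HX [/H1|/H3]; auto.
  + move=> b /List.in_app_iff [/List.in_map_iff [b' [<- Hb]]|/List.in_map_iff [b' [<- Hb]]].
    * have [s [Hs Hb's]] := H2 _ Hb. exists s; split; first by apply/HX; left.
      split => //; by apply: H1.
    * have [s [Hs Hb's]] := H4 _ Hb. exists s; split; first by apply/HX; right.
      split => //; by apply: H3.
- move=> [H1 H2].
  exists (fun s => X s /\ T p.1 s), (fun s => X s /\ T q.1 s); split; [|split; split].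
  + move=> s; split; last by case=> [[]|[]].
    move=> Hs; by case: (H1 s Hs) => ?; [left|right].
  + by move=> s [].
  + move=> b Hb. have [s [Hs [Ha Hbs]]] : exists s, X s /\ T (FAnd p.1 b) s.
      apply: H2; apply/List.in_app_iff; left; apply/List.in_map_iff; by exists b.
    by exists s.
  + by move=> s [].
  + move=> b Hb. have [s [Hs [Ha Hbs]]] : exists s, X s /\ T (FAnd q.1 b) s.
      apply: H2; apply/List.in_app_iff; right; apply/List.in_map_iff; by exists b.
    by exists s.
Qed.

Lemma ex_basic A (X : team A) v p :
  (exists F : assignment A -> dom A -> Prop,
      (forall s, X s -> exists m, F s m) /\
      bsat (fun s' => exists s m, [/\ X s, F s m & s' = upd s v m]) p)
  <-> bsat X (exb v p).
Proof.
rewrite /bsat /=; split.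
- move=> [F [HF [H1 H2]]]; split.
  + move=> s Hs; have [m Hm] := HF s Hs; exists m; apply: H1; by exists s, m.
  + move=> b /List.in_map_iff [b' [<- Hb]].
    have [s' [[s [m [Hs Hm ->]]] Hb's]] := H2 _ Hb.
    exists s; split => //; exists m; split => //; apply: H1; by exists s, m.
- move=> [H1 H2]; exists (fun s m => T p.1 (upd s v m)); split; first by [].
  split.
  + by move=> s' [s [m [_ Hm ->]]].
  + move=> b Hb.
    have [s [Hs [m [Ha Hbm]]]] : exists s, X s /\ T (FEx v (FAnd p.1 b)) s.
      apply: H2; apply/List.in_map_iff; by exists b.
    exists (upd s v m); split => //; by exists s, m.
Qed.

Lemma all_basic A (X : team A) v p :
  bsat (fun s' => exists s m, X s /\ s' = upd s v m) p <-> bsat X (allb v p).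
Proof.
rewrite /bsat /=; split.
- move=> [H1 H2]; split.
  + move=> s Hs m; apply: H1; by exists s, m.
  + move=> b /List.in_map_iff [b' [<- Hb]].
    have [s' [[s [m [Hs ->]]] Hb's]] := H2 _ Hb.
    exists s; split => //; by exists m.
- move=> [H1 H2]; split.
  + by move=> s' [s [m [Hs ->]]]; apply: H1.
  + move=> b Hb.
    have [s [Hs [m Hbm]]] : exists s, X s /\ T (FEx v b) s.
      apply: H2; apply/List.in_map_iff; by exists b.
    exists (upd s v m); split => //; by exists s, m.
Qed.

Lemma nf_correct phi A (X : team A) : sat phi X <-> nsat X (nf phi).
Proof.
elim: phi X => /=.
- move=> t1 t2 X; by rewrite nsat_single.
- move=> t1 t2 X; by rewrite nsat_single.
- move=> r ts X; by rewrite nsat_single.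
- move=> r ts X; by rewrite nsat_single.
- move=> a IHa b IHb X; by rewrite nsat_conj IHa IHb.
- move=> a IHa b IHb X; rewrite nsat_prod; split.
  + move=> [Y [Z [HX [/IHa [p [Hp H1]] /IHb [q [Hq H2]]]]]].
    exists p, q; split => //; apply/or_basic; by exists Y, Z.
  + move=> [p [q [Hp Hq /or_basic [Y [Z [HX [H1 H2]]]]]]].
    exists Y, Z; split => //; split; [apply/IHa|apply/IHb]; [by exists p|by exists q].
- move=> v a IH X; rewrite nsat_map; split.
  + move=> [F [HF /IH [p [Hp H]]]]; exists p; split => //; apply/ex_basic.
    by exists F.
  + move=> [p [Hp /ex_basic [F [HF H]]]]; exists F; split => //; apply/IH.
    by exists p.
- move=> v a IH X; rewrite nsat_map; split.
  + move=> /IH [p [Hp H]]; exists p; split => //; by apply/all_basic.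
  + move=> [p [Hp /all_basic H]]; apply/IH; by exists p.
- move=> X; split.
  + move=> [s Hs]; exists (top, [:: top]); split; first by left.
    split => // b [<-|[]]; by exists s.
  + move=> [p [[<-|[]] [_ H]]]. have [s [Hs _]] := H top (or_introl erefl).
    by exists s.
- move=> a IHa b IHb X; by rewrite nsat_app IHa IHb.
- move=> a IH X; by rewrite nsat_neg IH.
Qed.

Definition bot : formula L := And (NE L) (NEq (@Var L 0) (@Var L 0)).

Fixpoint hits (bs : seq fo) : formula L :=
  match bs with
  | [::] => emb top
  | b :: bs' => And (Or (And (emb b) (NE L)) (emb top)) (hits bs')
  end.

Definition bform (p : basic) : formula L := And (emb p.1) (hits p.2).

Fixpoint toF (N : seq basic) : formula L :=
  match N with
  | [::] => bot
  | p :: N' => GOr (bform p) (toF N')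
  end.

Lemma nf_emb a : neg_free (emb a).
Proof. by elim: a => //= a -> b ->. Qed.

Lemma nf_hits bs : neg_free (hits bs).
Proof. by elim: bs => //= b bs ->; rewrite nf_emb. Qed.

Lemma nf_toF N : neg_free (toF N).
Proof. by elim: N => //= p N ->; rewrite /bform /= nf_emb nf_hits. Qed.

Lemma hit1 A (X : team A) b :
  sat (Or (And (emb b) (NE L)) (emb top)) X <-> exists s, X s /\ T b s.
Proof.
simpl; split.
- move=> [Y [Z [HX [[/flat H1 [s Hs]] _]]]].
  exists s; split; last by apply: H1. by apply/HX; left.
- move=> [s [Hs Hb]]. exists (fun s => X s /\ T b s), X; split; [|split; [split|]].
  + move=> s'; split; [by right|by case=> [[]|]].
  + by apply/flat => s' [].
  + by exists s.
  + by move=> * /=.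
Qed.

Lemma sat_hits A (X : team A) bs :
  sat (hits bs) X <-> forall b, List.In b bs -> exists s, X s /\ T b s.
Proof.
elim: bs => [|b bs IH] /=.
- by split => // _ * /=.
- rewrite -/(sat (Or (And (emb b) (NE L)) (emb top)) X) hit1 IH; split.
  + by move=> [H1 H2] b' [<-|/H2].
  + move=> H; split; [apply: H; by left|move=> b' Hb'; apply: H; by right].
Qed.

Lemma sat_toF A (X : team A) N : sat (toF N) X <-> nsat X N.
Proof.
elim: N => [|p N IH] /=.
- split; first by move=> [[s Hs] H]; case: (H s Hs).
  by move=> [p [[]]].
- rewrite IH /bform /= flat sat_hits; split.
  + case=> [H|[q [Hq H]]]; [exists p; split; [by left|by []]|exists q; split; [by right|by []]].
  + move=> [q [[<-|Hq] H]]; [by left|right; by exists q].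
Qed.

End NF.

Theorem mainTheorem18 (L : signature) :
  (forall phi : formula L, exists psi : formula L,
      neg_free psi /\ equivalent phi psi) /\
  (forall psi : formula L, neg_free psi ->
      exists phi : formula L, equivalent psi phi).
Proof.
split.
- move=> phi; exists (toF (nf phi)); split; first by apply: nf_toF.
  move=> A X; by rewrite sat_toF nf_correct.
- move=> psi _; by exists psi.
Qed.
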